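(* Let $$B_1(x,y)=\frac{16-7x^2+8x-14xy+8y-7y^2}{16\sqrt{(2-x)(2-x-y)x}}.$$ If $0<y<x\le1$, then $B_1(x,y)>1$. *)

(* Defs.v *)
From Stdlib Require Import Reals.
Open Scope R_scope.

Definition B1_fn (x y : R) : R :=
  (16 - 7 * x ^ 2 + 8 * x - 14 * x * y + 8 * y - 7 * y ^ 2)
  / (16 * sqrt ((2 - x) * (2 - x - y) * x)).

(* Main.v *)
Require Import Defs.
From Stdlib Require Import Reals.
From Stdlib Require Import Lra Psatz.
Local Open Scope R_scope.

Lemma c1 s : 0 < s -> s <= 1 -> (16+8*s-7*s^2)^2 > 256*(s*(2-s)*(2-s)).
Proof. intros. pose proof (pow2_ge_0 (s-1)). pose proof (pow2_ge_0 (s-1/2)). nra. Qed.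

Lemma c2t t : 0 <= t -> t <= 1 -> 16 -96*t +344*t^2 -280*t^3 +49*t^4 > 0.
Proof.
intros. pose proof (pow2_ge_0 (t-1/3)). pose proof (pow2_ge_0 (t-2/5)).
pose proof (pow2_ge_0 (t^2-t)).
assert (0 <= t*(1-t)) by nra. nra.
Qed.

Lemma c2 s : 1 <= s -> s <= 2 -> (16+8*s-7*s^2)^2 > 256*(2-s).
Proof.
intros. pose proof (c2t (2-s)).
assert (E: (16+8*s-7*s^2)^2 - 256*(2-s) =
  16 -96*(2-s) +344*(2-s)^2 -280*(2-s)^3 +49*(2-s)^4) by ring.
lra.
Qed.

Theorem lemma3 (x y : R) (hy : (0 < y)%R) (hyx : (y < x)%R) (hx : (x <= 1)%R) :
  (B1_fn x y > 1)%R.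
Proof.
unfold B1_fn.
set (s := x + y).
set (N := 16 - 7 * x ^ 2 + 8 * x - 14 * x * y + 8 * y - 7 * y ^ 2).
set (D := (2 - x) * (2 - x - y) * x).
assert (HN : N = 16 + 8*s - 7*s^2) by (unfold N, s; ring).
assert (Hs2 : s < 2) by (unfold s; lra).
assert (Hs0 : 0 < s) by (unfold s; lra).
assert (HD : D = x*(2-x)*(2-s)) by (unfold D, s; ring).
assert (HDpos : 0 < D).
{ rewrite HD. apply Rmult_lt_0_compat; [apply Rmult_lt_0_compat|]; lra. }
assert (HNpos : 0 < N) by (rewrite HN; nra).
assert (Hsq : 256 * D < N^2).
{ destruct (Rle_lt_dec s 1) as [h|h].
  - assert (D <= s*(2-s)*(2-s)).
    { rewrite HD. assert (0 <= (s-x)*(2-s-x)) by (unfold s in *; nra).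
      assert (0 <= 2 - s) by lra. nra. }
    pose proof (c1 s Hs0 h). rewrite HN. lra.
  - assert (D <= 2-s).
    { rewrite HD. assert (x*(2-x) <= 1) by nra. assert (0 <= 2 - s) by lra. nra. }
    pose proof (c2 s ltac:(lra) ltac:(lra)). rewrite HN. lra. }
assert (Hsqrt : 16 * sqrt D < N).
{ assert (sqrt (256 * D) < sqrt (N^2)).
  { apply sqrt_lt_1; lra. }
  rewrite sqrt_mult in H by lra.
  replace 256 with (16^2) in H by ring.
  rewrite !sqrt_pow2 in H by lra. exact H. }
assert (0 < sqrt D) by (apply sqrt_lt_R0; lra).
apply Rlt_gt. apply (Rmult_lt_reg_r (16 * sqrt D)). lra.
unfold Rdiv. rewrite Rmult_assoc, Rinv_l by lra. lra.
Qed.
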